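(* Let $a_1,\dots,a_k$ be non-negative integers with $\gcd(a_1,\dots,a_k)=1$, let $S=\langle a_1,\dots,a_k\rangle$ and $G(S)=\mathbb{Z}_{\geq0}\setminus S$. Let $I=\langle y_1-x^{a_1},\dots,y_k-x^{a_k}\rangle\subset\mathbb{Q}[x,y_1,\dots,y_k]$ and let $\mathcal{B}=\{g_1,\dots,g_r\}$ be the reduced Groebner basis of $I$ with respect to an elimination ordering for $x$. Let $q_i\in\mathbb{Z}_{\geq0}^{k+1}$ be the exponent of the leading monomial of $g_i$, let $K_{q_i}=q_i+\mathbb{Z}_{\geq0}^{k+1}$, and let $\overline{K_{q_i}}=\mathbb{Z}_{\geq0}^{k+1}\setminus K_{q_i}$. Let $\{x=0\}=\{(\sigma_0,\dots,\sigma_k)\in\mathbb{Z}^{k+1}_{\geq0}:\sigma_0=0\}$. Then: (1) the map $\mathcal{F}:G(S)\to\left[\bigcap_i\overline{K_{q_i}}\right]\setminus\{x=0\}$, $N\mapsto \exp(N_{\mathcal{B}}(x^N))$, is well defined and is a bijection; (2) the map $\mathcal{G}:S\to\left[\bigcap_i\overline{K_{q_i}}\right]\cap\{x=0\}$, $M\mapsto\exp(N_{\mathcal{B}}(x^M))$, is well defined and is a bijection.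
   Context: An elimination ordering for $x$ is a monomial order on $\mathbb{Q}[x,y_1,\dots,y_k]$ in which every monomial divisible by $x$ is greater than every monomial in $y_1,\dots,y_k$ only (e.g. lex with $x>y_1>\dots>y_k$). For a monomial $x^{\sigma_0}y_1^{\sigma_1}\cdots y_k^{\sigma_k}$, $\exp$ denotes its exponent vector $(\sigma_0,\sigma_1,\dots,\sigma_k)\in\mathbb{Z}^{k+1}_{\geq0}$. $N_{\mathcal{B}}(f)$ is the normal form of $f$ with respect to $\mathcal{B}$ (the unique remainder of $f$ on division by $\mathcal{B}$); for a monomial $x^N$ it is a monomial. *)

(* Defs.v *)
From HB Require Import structures.
From mathcomp Require Import all_boot all_order all_algebra.
From mathcomp Require Import mpoly.
From Stdlib Require Import ClassicalEpsilon.
Set Implicit Arguments. Unset Strict Implicit. Unset Printing Implicit Defensive.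
Import Order.TTheory GRing.Theory Num.Theory.
Local Open Scope ring_scope.

(* Variables of Q[x,y_1,...,y_k] are indexed by 'I_k.+1:
   index 0 is x, index (lift ord0 i) is y_(i+1).
   A monomial x^s0 y1^s1 ... yk^sk is 'X_[m] with m : 'X_{1..k.+1};
   its exponent vector exp is m itself. *)

Definition monomial_order n (le : rel 'X_{1..n}) : Prop :=
  (reflexive le /\ antisymmetric le /\ transitive le /\ total le) /\
  (forall m1 m2 m, le m1 m2 -> le (mnm_add m1 m) (mnm_add m2 m)) /\
  (forall m, le mnm0 m).

Definition elimination_order_x n (le : rel 'X_{1..n.+1}) : Prop :=
  forall m m' : 'X_{1..n.+1}, (0 < m ord0)%N -> m' ord0 = 0%N ->
    le m' m /\ m' != m.

(* Leading monomial of p w.r.t. le (mnm0 for p = 0). *)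
Definition lm n (le : rel 'X_{1..n}) (p : {mpoly rat[n]}) : 'X_{1..n} :=
  foldr (fun m acc => if le acc m then m else acc) mnm0 (msupp p).

Definition in_ideal n (gs : seq {mpoly rat[n]}) (f : {mpoly rat[n]}) : Prop :=
  exists cs : seq {mpoly rat[n]}, size cs = size gs /\
    f = \sum_(i < size gs) cs`_i * gs`_i.

(* B (listed without repetition) is the reduced Groebner basis, w.r.t. le,
   of the ideal generated by gens. (m1 <= m2)%MM, i.e. lem, is monomial
   divisibility. *)
Definition reduced_groebner n (le : rel 'X_{1..n})
    (gens B : seq {mpoly rat[n]}) : Prop :=
  [/\ uniq B,
      (forall g, g \in B -> g != 0 /\ in_ideal gens g),
      (forall f, in_ideal gens f -> f != 0 ->
          exists2 g, g \in B & lem (lm le g) (lm le f)),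
      (forall g, g \in B -> g@_(lm le g) = 1)
    & (forall g g', g \in B -> g' \in B -> g' != g ->
          forall m, m \in msupp g -> ~~ lem (lm le g') m)].

Definition is_remainder n (le : rel 'X_{1..n}) (B : seq {mpoly rat[n]})
    (f r : {mpoly rat[n]}) : Prop :=
  in_ideal B (f - r) /\
  (forall m, m \in msupp r -> forall g, g \in B -> ~~ lem (lm le g) m).

(* Normal form N_B(f): the (unique, when B is a Groebner basis) remainder. *)
Definition NF n (le : rel 'X_{1..n}) (B : seq {mpoly rat[n]})
    (f : {mpoly rat[n]}) : {mpoly rat[n]} :=
  epsilon (inhabits 0) (is_remainder le B f).

Definition in_semigroup k (a : 'I_k -> nat) (N : nat) : Prop :=
  exists c : 'I_k -> nat, N = (\sum_(i < k) c i * a i)%N.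

Definition toric_gens k (a : 'I_k -> nat) : seq {mpoly rat[k.+1]} :=
  [seq 'X_(lift ord0 i) - 'X_ord0 ^+ a i | i <- enum 'I_k].

(* Membership in the intersection of the complements of the K_{q_i}. *)
Definition outside_K n (le : rel 'X_{1..n}) (B : seq {mpoly rat[n]})
    (m : 'X_{1..n}) : Prop :=
  forall g, g \in B -> ~~ lem (lm le g) m.

(* Main.v *)
Require Import Defs.
From HB Require Import structures.
From mathcomp Require Import all_boot all_order all_algebra.
From mathcomp Require Import mpoly.
From Stdlib Require Import Classical ClassicalEpsilon.
Set Implicit Arguments. Unset Strict Implicit. Unset Printing Implicit Defensive.
Import Order.TTheory GRing.Theory Num.Theory.
Local Open Scope ring_scope.
Lemma min_exists (g : nat -> nat) (s : nat) :
  exists j, (s <= j)%N /\ forall j', (s <= j')%N -> (g j <= g j')%N.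
Proof.
suff H : forall v j, (s <= j)%N -> (g j <= v)%N ->
  exists j, (s <= j)%N /\ forall j', (s <= j')%N -> (g j <= g j')%N.
  by apply: (H (g s) s).
elim=> [|v IH] j sj gj.
  exists j; split=> // j' _; move: gj; rewrite leqn0 => /eqP ->; done.
destruct (classic (forall j', (s <= j')%N -> (g j <= g j')%N)) as [H|H].
  by exists j.
apply: NNPP => H2; apply: H => j' sj'.
case: (leqP (g j) (g j')) => // lt.
exfalso; apply: H2; apply: (IH j') => //.
by rewrite -ltnS; apply: leq_trans lt gj.
Qed.

Definition hmin (g : nat -> nat) (s : nat) : nat :=
  epsilon (inhabits 0%N) (fun j => (s <= j)%N /\ forall j', (s <= j')%N -> (g j <= g j')%N).

Lemma hminP g s : (s <= hmin g s)%N /\ forall j', (s <= j')%N -> (g (hmin g s) <= g j')%N.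
Proof. exact: (epsilon_spec _ _ (min_exists g s)). Qed.

Fixpoint phimon (g : nat -> nat) (i : nat) : nat :=
  match i with 0 => hmin g 0 | i'.+1 => hmin g (phimon g i').+1 end.

Lemma incr_of_succ (phi : nat -> nat) : (forall i, phi i < phi i.+1)%N ->
  forall i j, (i < j)%N -> (phi i < phi j)%N.
Proof.
move=> H i j; elim: j => // j IH; rewrite ltnS leq_eqVlt => /orP [/eqP -> //|/IH h].
exact: ltn_trans h (H j).
Qed.

Lemma subseq_mono (g : nat -> nat) : exists phi : nat -> nat,
  (forall i j, (i < j)%N -> (phi i < phi j)%N) /\
  (forall i j, (i <= j)%N -> (g (phi i) <= g (phi j))%N).
Proof.
have Hmin : forall i j', (phimon g i <= j')%N -> (g (phimon g i) <= g j')%N.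
  case=> [|i] j' h /=.
    by apply: (proj2 (hminP g 0)).
  apply: (proj2 (hminP g _)); apply: leq_trans h; exact: (proj1 (hminP g _)).
have Hinc : forall i j, (i < j)%N -> (phimon g i < phimon g j)%N.
  apply: incr_of_succ => i /=; exact: (proj1 (hminP g _)).
exists (phimon g); split=> // i j; rewrite leq_eqVlt => /orP [/eqP -> //|/Hinc h].
by apply: Hmin; apply: ltnW.
Qed.

Lemma dickson_gen n (f : nat -> 'X_{1..n}) (l : seq 'I_n) : exists phi : nat -> nat,
  (forall i j, (i < j)%N -> (phi i < phi j)%N) /\
  (forall c, c \in l -> forall i j, (i <= j)%N -> (f (phi i) c <= f (phi j) c)%N).
Proof.
elim: l => [|c l [phi [Hphi Hl]]].
  by exists id.
have [psi [Hpsi Hm]] := subseq_mono (fun i => f (phi i) c).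
exists (phi \o psi); split.
  by move=> i j h; apply: Hphi; apply: Hpsi.
move=> c'; rewrite inE => /orP [/eqP ->|cl] i j ij /=; first by apply: Hm.
apply: Hl => //; rewrite leq_eqVlt in ij; case/orP: ij => [/eqP -> //|h].
by apply: ltnW; apply: Hpsi.
Qed.

Lemma dickson n (f : nat -> 'X_{1..n}) : exists i j, (i < j)%N /\ lem (f i) (f j).
Proof.
have [phi [Hphi Hl]] := dickson_gen f (enum 'I_n).
exists (phi 0%N), (phi 1%N); split; first by apply: Hphi.
by apply/mnm_lepP => c; apply: Hl; rewrite ?mem_enum.
Qed.

Definition mlt n (le : rel 'X_{1..n}) (m1 m2 : 'X_{1..n}) := le m1 m2 && (m1 != m2).

Lemma mo_wf n (le : rel 'X_{1..n}) : monomial_order le -> well_founded (mlt le).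
Proof.
move=> [[refl [anti [trans tot]]] [compat le0]].
have A : forall x y, le x y -> le y x -> x = y by move=> x y h1 h2; apply: anti; rewrite h1 h2.
have ltT : forall x y z, mlt le x y -> mlt le y z -> mlt le x z.
  move=> x y z /andP [lxy nxy] /andP [lyz nyz]; apply/andP; split.
    exact: trans lxy lyz.
  apply/eqP => exz; move: lxy lyz nxy; rewrite exz => lzy lyz.
  by rewrite (A _ _ lzy lyz) eqxx.
move=> m0; apply: NNPP => nA.
have step : forall m, ~ Acc (mlt le) m -> exists m', mlt le m' m /\ ~ Acc (mlt le) m'.
  move=> m nm; apply: NNPP => H; apply: nm; constructor => y hy.
  by apply: NNPP => ny; apply: H; exists y.
pose st m := epsilon (inhabits m) (fun m' => mlt le m' m /\ ~ Acc (mlt le) m').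
pose sq i := iter i st m0.
have Hst : forall m, ~ Acc (mlt le) m -> mlt le (st m) m /\ ~ Acc (mlt le) (st m).
  by move=> m nm; exact: (epsilon_spec _ _ (step _ nm)).
have Hs0 : forall i, ~ Acc (mlt le) (sq i).
  by elim=> [|i IH] //=; exact: (proj2 (Hst _ IH)).
have Hs : forall i, ~ Acc (mlt le) (sq i) /\ mlt le (sq i.+1) (sq i).
  by move=> i; split; [exact: Hs0 | exact: (proj1 (Hst _ (Hs0 i)))].
have Hlt : forall i j, (i < j)%N -> mlt le (sq j) (sq i).
  move=> i j; elim: j => // j IH; rewrite ltnS leq_eqVlt => /orP [/eqP ->|h].
    exact: (proj2 (Hs j)).
  exact: ltT (proj2 (Hs j)) (IH h).
have [i [j [ij lij]]] := dickson sq.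
have /andP [l1 n1] := Hlt _ _ ij.
have l2 : le (sq i) (sq j).
  have := compat _ _ (sq i) (le0 (sq j - sq i)%MM).
  by rewrite add0m submK.
by move: n1; rewrite (A _ _ l1 l2) eqxx.
Qed.
Section Ideal.
Context (n : nat).
Implicit Types (gs hs : seq {mpoly rat[n]}) (f g h : {mpoly rat[n]}).

Lemma in_idealP gs f : in_ideal gs f <->
  exists c : nat -> {mpoly rat[n]}, f = \sum_(i < size gs) c i * gs`_i.
Proof.
split=> [[cs [_ ->]]|[c ->]]; first by exists (fun i => cs`_i).
exists (mkseq c (size gs)); rewrite size_mkseq; split=> //.
by apply: eq_bigr => i _; rewrite nth_mkseq.
Qed.

Lemma ideal0 gs : in_ideal gs 0.
Proof. by apply/in_idealP; exists (fun=> 0); rewrite big1 // => i _; rewrite mul0r. Qed.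

Lemma idealD gs f g : in_ideal gs f -> in_ideal gs g -> in_ideal gs (f + g).
Proof.
move=> /in_idealP [c1 ->] /in_idealP [c2 ->]; apply/in_idealP.
by exists (fun i => c1 i + c2 i); rewrite -big_split; apply: eq_bigr => i _; rewrite mulrDl.
Qed.

Lemma idealM gs h f : in_ideal gs f -> in_ideal gs (h * f).
Proof.
move=> /in_idealP [c ->]; apply/in_idealP; exists (fun i => h * c i).
by rewrite mulr_sumr; apply: eq_bigr => i _; rewrite mulrA.
Qed.

Lemma idealMr gs h f : in_ideal gs f -> in_ideal gs (f * h).
Proof. by rewrite mulrC; apply: idealM. Qed.

Lemma idealN gs f : in_ideal gs f -> in_ideal gs (- f).
Proof. by move=> h; rewrite -mulN1r; apply: idealM. Qed.

Lemma idealB gs f g : in_ideal gs f -> in_ideal gs g -> in_ideal gs (f - g).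
Proof. by move=> h1 h2; apply: idealD => //; apply: idealN. Qed.

Lemma idealZ gs (c : rat) f : in_ideal gs f -> in_ideal gs (c *: f).
Proof. by move=> h; rewrite -mul_mpolyC; apply: idealM. Qed.

Lemma ideal_sum gs (I : Type) (r : seq I) (P : pred I) (F : I -> {mpoly rat[n]}) :
  (forall i, P i -> in_ideal gs (F i)) -> in_ideal gs (\sum_(i <- r | P i) F i).
Proof.
move=> H; apply: (big_ind (in_ideal gs)) => //; [exact: ideal0 | exact: idealD].
Qed.

Lemma ideal_mem gs g : g \in gs -> in_ideal gs g.
Proof.
move=> gin; apply/in_idealP; exists (fun i => (i == index g gs)%:R).
have jlt : (index g gs < size gs)%N by rewrite index_mem.
rewrite (bigD1 (Ordinal jlt)) //= eqxx mul1r nth_index // big1 ?addr0 // => i ni.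
suff /negbTE -> : (i : nat) != index g gs by rewrite mul0r.
by apply: contra ni => /eqP ei; apply/eqP/val_inj.
Qed.

Lemma ideal_trans gs hs f : (forall g, g \in gs -> in_ideal hs g) ->
  in_ideal gs f -> in_ideal hs f.
Proof.
move=> H /in_idealP [c ->]; apply: ideal_sum => i _; apply: idealM; apply: H.
exact: mem_nth.
Qed.

Lemma ideal_congM gs p1 p2 q1 q2 : in_ideal gs (p1 - p2) -> in_ideal gs (q1 - q2) ->
  in_ideal gs (p1 * q1 - p2 * q2).
Proof.
move=> h1 h2.
have -> : p1 * q1 - p2 * q2 = p1 * (q1 - q2) + (p1 - p2) * q2.
  by rewrite mulrBr mulrBl addrA subrK.
by apply: idealD; [apply: idealM | apply: idealMr].
Qed.

End Ideal.
Section LM.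
Context (n : nat) (le : rel 'X_{1..n}) (hle : monomial_order le).

Lemma lm_supp (p : {mpoly rat[n]}) : p != 0 -> lm le p \in msupp p.
Proof.
rewrite -msupp_eq0 /lm; case: hle => _ [_ le0].
elim: (msupp p) => [//|x s IH] _ /=.
case: s IH => [|y s] IH /=; first by rewrite le0 inE eqxx.
have /(_ isT) := IH.
set F := foldr _ _ _ => hF.
by case: ifP => _; rewrite inE ?eqxx // hF orbT.
Qed.

Lemma le_lm (p : {mpoly rat[n]}) m : m \in msupp p -> le m (lm le p).
Proof.
rewrite /lm; case: hle => [[refl [_ [trans tot]]] _].
elim: (msupp p) => [//|x s IH] /=.
set F := foldr _ _ _.
rewrite inE => /orP [/eqP ->|ms].
  case: ifP => h; first exact: refl.
  by case/orP: (tot F x) => //; rewrite h.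
case: ifP => h; last exact: IH.
exact: trans (IH ms) h.
Qed.

End LM.
Section Ev.
Context (k : nat) (a : 'I_k -> nat).

Definition wt (i : 'I_k.+1) : nat := if unlift ord0 i is Some j then a j else 1%N.
Definition wgt (m : 'X_{1..k.+1}) : nat := (\sum_(i < k.+1) wt i * m i)%N.
Definition evv (i : 'I_k.+1) : {poly rat} := 'X^(wt i).
Definition evp (p : {mpoly rat[k.+1]}) : {poly rat} := mmap (@polyC rat) evv p.

Lemma wt0 : wt ord0 = 1%N.
Proof. by rewrite /wt unlift_none. Qed.

Lemma wtS j : wt (lift ord0 j) = a j.
Proof. by rewrite /wt liftK. Qed.

Lemma wE m : wgt m = (m ord0 + \sum_(j < k) a j * m (lift ord0 j))%N.
Proof. by rewrite /wgt big_ord_recl wt0 mul1n; congr addn; apply: eq_bigr => j _; rewrite wtS. Qed.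

Lemma wD m1 m2 : wgt (m1 + m2)%MM = (wgt m1 + wgt m2)%N.
Proof. by rewrite /wgt -big_split; apply: eq_bigr => i _; rewrite mnmDE mulnDr. Qed.

Lemma mmap1_w m : mmap1 evv m = 'X^(wgt m).
Proof.
rewrite /mmap1 /wgt.
under eq_bigr => i _ do rewrite /evv -exprM.
by rewrite prodrXr.
Qed.

Lemma evX m : evp 'X_[m] = 'X^(wgt m).
Proof. by rewrite /evp mmapX mmap1_w. Qed.

Lemma ev_coef p N : (evp p)`_N = \sum_(m <- msupp p) p@_m * (wgt m == N)%:R.
Proof.
rewrite /evp /mmap coef_sum; apply: eq_bigr => m _.
rewrite mmap1_w coefCM coefXn eq_sym.
by case: (wgt m == N).
Qed.

Lemma evB p q : evp (p - q) = evp p - evp q.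
Proof. exact: rmorphB. Qed.

Lemma evM p q : evp (p * q) = evp p * evp q.
Proof. exact: rmorphM. Qed.

Lemma ev_gen g : g \in toric_gens a -> evp g = 0.
Proof.
case/mapP => i _ ->.
rewrite /evp rmorphB rmorphXn /= !mmapX !mmap1_w.
have -> : wgt U_(lift ord0 i)%MM = a i.
  rewrite /wgt (bigD1 (lift ord0 i)) //= mnm1E eqxx muln1 wtS big1 ?addn0 // => j nj.
  by rewrite mnm1E eq_sym (negbTE nj) muln0.
have -> : wgt U_(ord0)%MM = 1%N.
  rewrite /wgt (bigD1 ord0) //= mnm1E eqxx muln1 wt0 big1 ?addn0 // => j nj.
  by rewrite mnm1E eq_sym (negbTE nj) muln0.
by rewrite expr1 subrr.
Qed.

Lemma ev_ideal f : in_ideal (toric_gens a) f -> evp f = 0.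
Proof.
move=> /in_idealP [c ->]; rewrite /evp rmorph_sum big1 // => i _.
rewrite rmorphM /= [X in _ * X](_ : _ = 0) ?mulr0 //; exact: (ev_gen (mem_nth 0 (ltn_ord i))).
Qed.

End Ev.
Section Main.
Context (k : nat) (a : 'I_k -> nat) (le : rel 'X_{1..k.+1}) (hle : monomial_order le)
  (helim : elimination_order_x le) (B : seq {mpoly rat[k.+1]})
  (hB : reduced_groebner le (toric_gens a) B).

Local Notation gens := (toric_gens a).
Local Notation std := (outside_K le B).
Local Notation w := (wgt a).
Local Notation ev := (evp a).

Lemma B_gens g : g \in B -> in_ideal gens g.
Proof. by case: hB => _ H _ _ _ /H []. Qed.

Lemma idealB_gens f : in_ideal B f -> in_ideal gens f.
Proof. exact: ideal_trans B_gens. Qed.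

Lemma ideal_exp gs (p q : {mpoly rat[k.+1]}) e : in_ideal gs (p - q) ->
  in_ideal gs (p ^+ e - q ^+ e).
Proof.
move=> h; elim: e => [|e IH]; first by rewrite !expr0 subrr; exact: ideal0.
by rewrite !exprS; apply: ideal_congM.
Qed.

Lemma cong_var (v : 'I_k.+1) : in_ideal gens ('X_v - 'X_ord0 ^+ wt a v).
Proof.
case: (unliftP ord0 v) => [j ->|->].
  rewrite wtS; apply: ideal_mem; apply/mapP; exists j => //; exact: mem_enum.
by rewrite wt0 expr1 subrr; exact: ideal0.
Qed.

Lemma cong_mono m : in_ideal gens ('X_[m] - 'X_ord0 ^+ w m).
Proof.
rewrite mpolyXE_id /wgt -prodrXr.
apply: (big_ind2 (fun p q => in_ideal gens (p - q))).
- by rewrite subrr; exact: ideal0.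
- by move=> p1 q1 p2 q2 h1 h2; apply: ideal_congM.
- by move=> i _; rewrite exprM; apply: ideal_exp; apply: cong_var.
Qed.
Lemma binom_ideal m1 m2 : w m1 = w m2 -> in_ideal gens ('X_[m1] - 'X_[m2]).
Proof.
move=> e; have -> : 'X_[m1] - 'X_[m2] =
  ('X_[m1] - 'X_ord0 ^+ w m1) - ('X_[m2] - 'X_ord0 ^+ w m2) :> {mpoly rat[k.+1]}.
  by rewrite e opprB addrA subrK.
by apply: idealB; apply: cong_mono.
Qed.

Lemma suppXB (m1 m2 m : 'X_{1..k.+1}) :
  m \in msupp ('X_[m1] - 'X_[m2] : {mpoly rat[k.+1]}) -> m = m1 \/ m = m2.
Proof.
move/msuppB_le; rewrite !msuppX mem_cat !inE => /orP [/eqP ->|/eqP ->]; by [left|right].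
Qed.

Lemma coefXB (m1 m2 : 'X_{1..k.+1}) : m1 != m2 ->
  ('X_[m1] - 'X_[m2] : {mpoly rat[k.+1]})@_m1 = 1 /\
  ('X_[m1] - 'X_[m2] : {mpoly rat[k.+1]})@_m2 = -1.
Proof.
move=> ne; rewrite !mcoeffB !mcoeffX !eqxx (negbTE ne) eq_sym (negbTE ne).
by rewrite subr0 sub0r.
Qed.

Lemma lmXB (m1 m2 : 'X_{1..k.+1}) : m1 != m2 ->
  let f := ('X_[m1] - 'X_[m2] : {mpoly rat[k.+1]}) in
  [/\ f != 0, lm le f = m1 \/ lm le f = m2, le m1 (lm le f) & le m2 (lm le f)].
Proof.
move=> ne f; have [c1 c2] := coefXB ne.
have nz : f != 0 by apply/eqP => f0; move: c1; rewrite -/f f0 mcoeff0 => /eqP; rewrite eq_sym oner_eq0.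
split=> //; first exact: (suppXB (lm_supp hle nz)).
  by apply: (le_lm hle); rewrite mcoeff_msupp -/f c1 oner_neq0.
by apply: (le_lm hle); rewrite mcoeff_msupp -/f c2 oppr_eq0 oner_neq0.
Qed.

Lemma std_uniq m1 m2 : std m1 -> std m2 -> w m1 = w m2 -> m1 = m2.
Proof.
move=> s1 s2 e; apply: NNPP => /eqP ne.
have [nz hl _ _] := lmXB ne.
case: hB => _ _ H _ _.
have [g gB dg] := H _ (binom_ideal e) nz.
by case: hl => hl; rewrite hl in dg; [move: (s1 g gB) | move: (s2 g gB)]; rewrite dg.
Qed.

Lemma std_elim s m' : std s -> w s = w m' -> m' ord0 = 0%N -> s ord0 = 0%N.
Proof.
move=> ss e m0; apply: NNPP => /eqP; rewrite -lt0n => sp.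
have [lms nms] := helim sp m0.
have ne : s != m' by rewrite eq_sym.
have [nz hl l1 l2] := lmXB ne.
case: hB => _ _ H _ _.
have [g gB dg] := H _ (binom_ideal e) nz.
case: hl => hl.
  by move: (ss g gB); rewrite -hl dg.
move: l1; rewrite hl => l1.
case: hle => [[_ [anti _]] _].
by move: nms; rewrite (anti m' s) ?eqxx // lms l1.
Qed.
Definition red (f : {mpoly rat[k.+1]}) :=
  exists r : {mpoly rat[k.+1]}, (forall m, m \in msupp r -> std m) /\ in_ideal B (f - r).

Lemma redD f1 f2 : red f1 -> red f2 -> red (f1 + f2).
Proof.
move=> [r1 [s1 i1]] [r2 [s2 i2]]; exists (r1 + r2); split.
  by move=> m /msuppD_le; rewrite mem_cat => /orP [/s1|/s2].
have -> : f1 + f2 - (r1 + r2) = (f1 - r1) + (f2 - r2) by rewrite opprD addrACA.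
exact: idealD.
Qed.

Lemma redZ c f : red f -> red (c *: f).
Proof.
move=> [r [s i]]; exists (c *: r); split.
  by move=> m /msuppZ_le /s.
by rewrite -scalerBr; apply: idealZ.
Qed.

Lemma red0 : red 0.
Proof. by exists 0; split => [m|]; rewrite ?msupp0 // subrr; exact: ideal0. Qed.

Lemma red_ideal h : in_ideal B h -> red h.
Proof. by move=> ih; exists 0; split => [m|]; rewrite ?msupp0 // subr0. Qed.

Lemma red_sum (I : Type) (r : seq I) (P : pred I) (F : I -> {mpoly rat[k.+1]}) :
  (forall i, P i -> red (F i)) -> red (\sum_(i <- r | P i) F i).
Proof. by move=> H; apply: (big_ind red) => //; [exact: red0 | exact: redD]. Qed.

Lemma red_X m : red 'X_[m].
Proof.
elim/(well_founded_ind (mo_wf hle)): m => m IH.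
case: (classic (std m)) => [sm|nsm].
  exists 'X_[m]; split; last by rewrite subrr; exact: ideal0.
  by move=> m'; rewrite msuppX inE => /eqP ->.
have [g gB dg] : exists2 g, g \in B & lem (lm le g) m.
  apply: NNPP => H; apply: nsm => g gB; apply/negP => dg; apply: H; by exists g.
case: hB => _ Hnz _ Hmon _.
have gnz : g != 0 by case: (Hnz g gB).
set q := lm le g in dg *.
have gq : g@_q = 1 by apply: Hmon.
have qin : q \in msupp g by exact: lm_supp.
set u := (m - q)%MM.
have mE : m = (u + q)%MM by rewrite submK.
pose S := \sum_(q' <- msupp g | q' != q) g@_q' *: ('X_[u + q'] : {mpoly rat[k.+1]}).
have gE : g = 'X_[q] + \sum_(q' <- msupp g | q' != q) g@_q' *: 'X_[q'].
  by rewrite {1}(mpolyE g) (bigD1_seq q) ?msupp_uniq //= gq scale1r.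
have eX : 'X_[m] = 'X_[u] * g - S.
  rewrite [X in _ * X]gE mulrDr mulr_sumr.
  have -> : \sum_(q' <- msupp g | q' != q) 'X_[u] * (g@_q' *: 'X_[q']) = S.
    by apply: eq_bigr => q' _; rewrite mpolyXD scalerAr.
  by rewrite addrK mE mpolyXD.
have hS : red S.
  rewrite /S big_seq_cond; apply: red_sum => q' /andP [qin' nq].
  apply: redZ; apply: IH; apply/andP; split; last by rewrite mE eqm_add2l.
  case: hle => _ [compat _].
  by rewrite mE addmC (addmC u q); apply: compat; apply: (le_lm hle).
rewrite eX; have -> : 'X_[u] * g - S = 'X_[u] * g + (-1) *: S by rewrite scaleN1r.
apply: redD; last exact: redZ.
by apply: red_ideal; apply: idealM; apply: ideal_mem.
Qed.
Lemma wU0 : w (U_(ord0) : 'X_{1..k.+1})%MM = 1%N.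
Proof.
rewrite /wgt (bigD1 ord0) //= mnm1E eqxx muln1 wt0 big1 ?addn0 // => j nj.
by rewrite mnm1E eq_sym (negbTE nj) muln0.
Qed.

Lemma ev_xN N : ev ('X_ord0 ^+ N) = 'X^N.
Proof. by rewrite /evp rmorphXn /= -/(evp a _) evX wU0 expr1. Qed.

Lemma rem_mono N r : is_remainder le B ('X_ord0 ^+ N) r ->
  exists s, [/\ std s, w s = N & r = 'X_[s]].
Proof.
move=> [ir sr].
have sr' : forall m, m \in msupp r -> std m by move=> m /sr.
have er : ev r = 'X^N.
  have := ev_ideal (idealB_gens ir); rewrite /evp rmorphB /= -!/(evp a _) ev_xN.
  by move/eqP; rewrite subr_eq0 => /eqP <-.
have Hc : forall s, s \in msupp r -> r@_s = (w s == N)%:R.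
  move=> s sin; have := ev_coef a r (w s); rewrite er coefXn => ->.
  rewrite (bigD1_seq s) ?msupp_uniq //= eqxx mulr1 big1_seq ?addr0 // => m /andP [nms min].
  case: eqP => [ews|]; last by rewrite mulr0.
  by move: nms; rewrite (std_uniq (sr' _ min) (sr' _ sin) ews) eqxx.
have rnz : r != 0.
  apply/eqP => r0; have := ev_coef a r N; rewrite er coefXn eqxx r0 msupp0 big_nil.
  by move/eqP; rewrite oner_eq0.
have sin := lm_supp hle rnz; set s := lm le r in sin.
have ws : w s = N.
  apply/eqP; have := sin; rewrite mcoeff_msupp Hc //.
  by case: (w s == N) => //=; rewrite eqxx.
exists s; split=> //; first exact: sr'.
apply/mpolyP => m; rewrite mcoeffX.
case min: (m \in msupp r).
  have wm : w m = N.
    apply/eqP; have := min; rewrite mcoeff_msupp Hc //.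
    by case: (w m == N) => //=; rewrite eqxx.
  rewrite Hc // wm eqxx (std_uniq (sr' _ sin) (sr' _ min)) ?eqxx // wm ws //.
rewrite memN_msupp_eq0 ?min //; case: eqP => // esm.
by move: min; rewrite -esm sin.
Qed.

Lemma exists_rem N : exists r, is_remainder le B ('X_ord0 ^+ N) r.
Proof.
have [r [sr ir]] : red ('X_ord0 ^+ N) by rewrite mpolyXn; exact: red_X.
by exists r; split => // m /sr.
Qed.

Lemma exists_std N : exists s, std s /\ w s = N.
Proof.
have [r hr] := exists_rem N; have [s [ss ws _]] := rem_mono hr.
by exists s.
Qed.

Definition Fm (N : nat) : 'X_{1..k.+1} :=
  epsilon (inhabits mnm0) (fun s => std s /\ w s = N).

Lemma FmP N : std (Fm N) /\ w (Fm N) = N.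
Proof. exact: (epsilon_spec _ _ (exists_std N)). Qed.

Lemma NF_Fm N : NF le B ('X_ord0 ^+ N) = 'X_[Fm N].
Proof.
have := epsilon_spec (inhabits 0) _ (exists_rem N).
rewrite -/(NF le B _) => /rem_mono [s [ss ws ->]].
have [s1 s2] := FmP N.
by rewrite (std_uniq ss s1) // s2.
Qed.

Lemma Fm_eq m : std m -> Fm (w m) = m.
Proof. by move=> sm; have [s1 s2] := FmP (w m); apply: std_uniq. Qed.

Lemma semigroupP N : in_semigroup a N <-> Fm N ord0 = 0%N.
Proof.
split.
  move=> [c Nc].
  pose m' := [multinom (if unlift ord0 i is Some j then c j else 0%N) | i < k.+1].
  have m0 : m' ord0 = 0%N by rewrite mnmE unlift_none.
  have wm : w m' = N.
    rewrite wE m0 add0n Nc; apply: eq_bigr => j _; by rewrite mnmE liftK mulnC.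
  have [s1 s2] := FmP N.
  by apply: (std_elim s1 _ m0); rewrite s2 wm.
move=> h; exists (fun j => Fm N (lift ord0 j)).
have [_ s2] := FmP N.
rewrite -{1}s2 wE h add0n; apply: eq_bigr => j _; exact: mulnC.
Qed.
Lemma main_sec :
  (exists F : nat -> 'X_{1..k.+1},
     (forall N, ~ in_semigroup a N ->
        NF le B ('X_ord0 ^+ N) = 'X_[F N] /\
        outside_K le B (F N) /\ F N ord0 <> 0%N) /\
     (forall N1 N2, ~ in_semigroup a N1 -> ~ in_semigroup a N2 ->
        F N1 = F N2 -> N1 = N2) /\
     (forall m, outside_K le B m -> m ord0 <> 0%N ->
        exists N, ~ in_semigroup a N /\ F N = m)) /\
  (exists G : nat -> 'X_{1..k.+1},
     (forall M, in_semigroup a M ->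
        NF le B ('X_ord0 ^+ M) = 'X_[G M] /\
        outside_K le B (G M) /\ G M ord0 = 0%N) /\
     (forall M1 M2, in_semigroup a M1 -> in_semigroup a M2 ->
        G M1 = G M2 -> M1 = M2) /\
     (forall m, outside_K le B m -> m ord0 = 0%N ->
        exists M, in_semigroup a M /\ G M = m)).
Proof.
have inj : forall N1 N2, Fm N1 = Fm N2 -> N1 = N2.
  by move=> N1 N2 e; rewrite -(proj2 (FmP N1)) -(proj2 (FmP N2)) e.
split; exists Fm; split.
- move=> N nS; split; first exact: NF_Fm.
  split; first exact: (proj1 (FmP N)).
  by move=> h; apply: nS; apply/semigroupP.
- split; first by move=> N1 N2 _ _; apply: inj.
  move=> m sm m0; exists (w m); split; last exact: Fm_eq.
  by move/semigroupP; rewrite Fm_eq.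
- move=> M hM; split; first exact: NF_Fm.
  split; first exact: (proj1 (FmP M)).
  exact/semigroupP.
- split; first by move=> N1 N2 _ _; apply: inj.
  move=> m sm m0; exists (w m); split; last exact: Fm_eq.
  by apply/semigroupP; rewrite Fm_eq.
Qed.

End Main.

Theorem mainTheorem5 (k : nat) (a : 'I_k -> nat)
  (hgcd : (\big[gcdn/0%N]_(i < k) a i)%N = 1%N)
  (le : rel 'X_{1..k.+1}) (hle : monomial_order le)
  (helim : elimination_order_x le)
  (B : seq {mpoly rat[k.+1]}) (hB : reduced_groebner le (toric_gens a) B) :
  (* (1) F : G(S) -> [cap_i complement K_{q_i}] \ {x = 0} *)
  (exists F : nat -> 'X_{1..k.+1},
     (forall N, ~ in_semigroup a N ->
        NF le B ('X_ord0 ^+ N) = 'X_[F N] /\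
        outside_K le B (F N) /\ F N ord0 <> 0%N) /\
     (forall N1 N2, ~ in_semigroup a N1 -> ~ in_semigroup a N2 ->
        F N1 = F N2 -> N1 = N2) /\
     (forall m, outside_K le B m -> m ord0 <> 0%N ->
        exists N, ~ in_semigroup a N /\ F N = m)) /\
  (* (2) G : S -> [cap_i complement K_{q_i}] cap {x = 0} *)
  (exists G : nat -> 'X_{1..k.+1},
     (forall M, in_semigroup a M ->
        NF le B ('X_ord0 ^+ M) = 'X_[G M] /\
        outside_K le B (G M) /\ G M ord0 = 0%N) /\
     (forall M1 M2, in_semigroup a M1 -> in_semigroup a M2 ->
        G M1 = G M2 -> M1 = M2) /\
     (forall m, outside_K le B m -> m ord0 = 0%N ->
        exists M, in_semigroup a M /\ G M = m)).
Proof. exact: (main_sec hle helim hB). Qed.
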